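(* Let $\mathbf L$ be a locally compact non-discrete non-Archimedean field. Each uniform polyhedron $P$ over $\mathbf L$ is an ANRU.
   Context: A simplex over $\mathbf L$ is a closed ball $x+\pi^kB(c_0(\mathbf L,A'),0,1)$ ($\pi\in\mathbf L$ of maximal absolute value $<1$, $k\in\mathbb Z$) in a coordinate subspace $c_0(\mathbf L,A')$ of the Banach space $c_0(\mathbf L,A)$ (families in $\mathbf L$ tending to zero, sup norm). A polyhedron is a subset of $c_0(\mathbf L,A)$ which is a disjoint union of simplexes $s_i$, $i\in F$; it is uniform if $\sup_i\mathrm{diam}(s_i)<\infty$ and $\inf_{i\ne j}\mathrm{dist}(s_i,s_j)>0$. An ANRU is an ultrauniform space $X$ (uniformity generated by pseudoultrametrics) such that whenever $X$ is (uniformly) embedded into an ultrauniform space $Y$, there exist a uniform neighbourhood $V$ with $X\subset V\subset Y$ and a uniformly continuous retraction $r:V\to X$. *)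

(* Defs.v *)
From HB Require Import structures.
From mathcomp Require Import all_boot all_order all_algebra.
From Stdlib Require Lists.List.
From mathcomp Require Import boolp classical_sets cardinality reals.
Set Implicit Arguments. Unset Strict Implicit. Unset Printing Implicit Defensive.
Import Order.TTheory GRing.Theory Num.Theory.
Local Open Scope ring_scope.
Local Open Scope classical_set_scope.

Section Field.
Variables (R : realType) (K : fieldType) (abs : K -> R).

Definition nonarch_abs : Prop :=
  [/\ (forall x, 0 <= abs x),
      (forall x, abs x = 0 <-> x = 0),
      (forall x y, abs (x * y) = abs x * abs y) &
      (forall x y, abs (x + y) <= Num.max (abs x) (abs y))].

Definition open_in (U : set K) : Prop :=
  forall x, U x -> exists2 r : R, 0 < r & forall y, abs (y - x) < r -> U y.

Definition compact_in (S : set K) : Prop :=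
  forall (I : Type) (U : I -> set K), (forall i, open_in (U i)) ->
    (forall x, S x -> exists i, U i x) ->
    exists s : seq I, forall x, S x -> exists i, Stdlib.Lists.List.In i s /\ U i x.

Definition locally_compact_field : Prop :=
  forall x : K, exists2 r : R, 0 < r & compact_in [set y | abs (y - x) <= r].

Definition nondiscrete_field : Prop :=
  forall (x : K) (r : R), 0 < r -> exists y, y <> x /\ abs (y - x) < r.

Definition max_abs_lt1 (pi : K) : Prop :=
  abs pi < 1 /\ forall x, abs x < 1 -> abs x <= abs pi.

Variable A : Type.

Definition c0 (f : A -> K) : Prop :=
  forall eps : R, 0 < eps -> finite_set [set a | eps <= abs (f a)].

Definition c0dist (f g : A -> K) : R :=
  sup ([set 0] `|` range (fun a => abs (f a - g a))).

(* coordinate subspace c_0(L, A') (A' a subset of A) *)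
Definition coord_sub (A' : set A) (f : A -> K) : Prop :=
  forall a, ~ A' a -> f a = 0.

(* simplex x + pi^k B(c_0(L,A'),0,1) *)
Definition simplex (pi : K) (S : set (A -> K)) : Prop :=
  exists (A' : set A) (x : A -> K) (k : int),
    c0 x /\
    S = [set g | exists y, [/\ c0 y, coord_sub A' y,
                              c0dist y (fun _ => 0) <= 1 &
                              g = (fun a => x a + pi ^ k * y a)]].

Definition polyhedron_family (pi : K) (P : set (A -> K)) (F : Type)
    (s : F -> set (A -> K)) : Prop :=
  [/\ (forall i, simplex pi (s i)),
      (forall i j, i <> j -> s i `&` s j = set0) &
      P = [set f | exists i, s i f]].

Definition polyhedron (pi : K) (P : set (A -> K)) : Prop :=
  exists (F : Type) (s : F -> set (A -> K)), polyhedron_family pi P s.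

Definition uniform_polyhedron (pi : K) (P : set (A -> K)) : Prop :=
  exists (F : Type) (s : F -> set (A -> K)),
    [/\ polyhedron_family pi P s,
        (exists D : R, forall i f g, s i f -> s i g -> c0dist f g <= D) &
        (exists2 delta : R, 0 < delta & forall i j, i <> j ->
           forall f g, s i f -> s j g -> delta <= c0dist f g)].

End Field.

(* Uniform spaces given by a gauge (family of pseudometrics); the uniformity
   is the one generated by the gauge. *)
Record gauge_space (R : realType) := GaugeSpace {
  gs_car :> Type;
  gs_gauge : set (gs_car -> gs_car -> R) }.
Arguments gs_gauge {R} g _.

Section Uniform.
Variable R : realType.

Definition pseudoultrametric (T : Type) (d : T -> T -> R) : Prop :=
  [/\ (forall x y, 0 <= d x y), (forall x, d x x = 0),
      (forall x y, d x y = d y x) &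
      (forall x y z, d x z <= Num.max (d x y) (d y z))].

Definition ultrauniform (X : gauge_space R) : Prop :=
  forall d : X -> X -> R, gs_gauge X d -> pseudoultrametric d.

Definition entourage (X : gauge_space R) (E : X -> X -> Prop) : Prop :=
  exists n (ds : 'I_n -> X -> X -> R) (delta : R),
    [/\ 0 < delta, (forall i, gs_gauge X (ds i)) &
        forall x y, (forall i, ds i x y < delta) -> E x y].

Definition unif_cont (X Y : gauge_space R) (f : X -> Y) : Prop :=
  forall F, entourage F -> entourage (fun x x' => F (f x) (f x')).

Definition unif_embedding (X Y : gauge_space R) (e : X -> Y) : Prop :=
  [/\ injective e, unif_cont e &
      forall E, entourage E -> exists2 F, entourage F &
        forall x x', F (e x) (e x') -> E x x'].

Definition unif_nbhd (X Y : gauge_space R) (e : X -> Y) (V : set Y) : Prop :=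
  exists2 F, entourage F & forall x y, F (e x) y -> V y.

Definition unif_retraction (X Y : gauge_space R) (e : X -> Y) (V : set Y)
    (r : {y : Y | V y} -> X) : Prop :=
  (forall x (h : V (e x)), r (exist _ (e x) h) = x) /\
  (forall E, entourage E -> exists2 F, entourage F &
     forall y y' : {y : Y | V y}, F (proj1_sig y) (proj1_sig y') ->
       E (r y) (r y')).

Definition ANRU (X : gauge_space R) : Prop :=
  ultrauniform X /\
  forall (Y : gauge_space R) (e : X -> Y), ultrauniform Y -> unif_embedding e ->
    exists V : set Y, unif_nbhd e V /\
      exists r : {y : Y | V y} -> X, unif_retraction e r.

End Uniform.

Definition c0_subspace (R : realType) (K : fieldType) (abs : K -> R) (A : Type)
    (P : set (A -> K)) : gauge_space R :=
  @GaugeSpace R {f : A -> K | P f}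
    [set fun x y : {f : A -> K | P f} => c0dist abs (proj1_sig x) (proj1_sig y)].

(* Main.v *)
Require Import Defs.
From HB Require Import structures.
From mathcomp Require Import all_boot all_order all_algebra.
From mathcomp Require Import finmap boolp classical_sets cardinality reals.
From Stdlib Require ClassicalEpsilon.
Import Order.TTheory GRing.Theory Num.Theory.
Set Implicit Arguments. Unset Strict Implicit. Unset Printing Implicit Defensive.
Local Open Scope ring_scope.
Local Open Scope classical_set_scope.

Lemma abs0 (R : realType) (K : fieldType) (abs : K -> R) :
  nonarch_abs abs -> abs 0 = 0.
Proof. by case=> _ h _ _; apply/h. Qed.

Lemma abs_ge0 (R : realType) (K : fieldType) (abs : K -> R) :
  nonarch_abs abs -> forall x, 0 <= abs x.
Proof. by case. Qed.

Lemma abs1 (R : realType) (K : fieldType) (abs : K -> R) :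
  nonarch_abs abs -> abs 1 = 1.
Proof.
move=> [h0 h1 hM _]; have := hM 1 1; rewrite mulr1 => e.
have nz : abs 1 != 0 by apply/eqP => /h1 /eqP; rewrite oner_eq0.
by apply: (mulfI nz); rewrite mulr1 -e.
Qed.

Lemma absN (R : realType) (K : fieldType) (abs : K -> R) :
  nonarch_abs abs -> forall x, abs (- x) = abs x.
Proof.
move=> h x; have [h0 h1 hM _] := h.
have e1 : abs (-1) = 1.
  have := hM (-1) (-1); rewrite mulrNN mulr1 (abs1 h) => e.
  have ge := h0 (-1).
  have : (abs (-1) - 1) * (abs (-1) + 1) = 0 by rewrite -subr_sqr expr1n expr2 -e subrr.
  move/eqP; rewrite mulf_eq0 => /orP[]; first by rewrite subr_eq0 => /eqP.
  by rewrite addr_eq0 => /eqP e2; move: ge; rewrite e2 oppr_ge0 ler10.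
by rewrite -mulN1r hM e1 mul1r.
Qed.

Lemma absB (R : realType) (K : fieldType) (abs : K -> R) :
  nonarch_abs abs -> forall x y, abs (x - y) = abs (y - x).
Proof. by move=> h x y; rewrite -(absN h) opprB. Qed.

Lemma absV (R : realType) (K : fieldType) (abs : K -> R) :
  nonarch_abs abs -> forall x, abs (x^-1) = (abs x)^-1.
Proof.
move=> h x; have [h0 h1 hM _] := h.
have [->|nz] := eqVneq x 0; first by rewrite invr0 (abs0 h) invr0.
have : abs x * abs x^-1 = 1 by rewrite -hM divff // (abs1 h).
have nz' : abs x != 0 by apply/eqP => /h1 /eqP; rewrite (negbTE nz).
by move=> e; apply: (mulfI nz'); rewrite e divff.
Qed.

Lemma ultra (R : realType) (K : fieldType) (abs : K -> R) :
  nonarch_abs abs -> forall x y z, abs (x - z) <= Num.max (abs (x - y)) (abs (y - z)).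
Proof. by move=> [_ _ _ h] x y z; have := h (x - y) (y - z); rewrite addrA subrK. Qed.

Lemma ultra_lt (R : realType) (K : fieldType) (abs : K -> R) :
  nonarch_abs abs -> forall x y z e, abs (x - y) < e -> abs (y - z) < e -> abs (x - z) < e.
Proof. move=> h x y z e a b; apply: le_lt_trans (ultra h x y z) _; by rewrite gt_max a b. Qed.

Lemma ultra_le (R : realType) (K : fieldType) (abs : K -> R) :
  nonarch_abs abs -> forall x y z e, abs (x - y) <= e -> abs (y - z) <= e -> abs (x - z) <= e.
Proof. move=> h x y z e a b; apply: le_trans (ultra h x y z) _; by rewrite ge_max a b. Qed.

Lemma foldr_max_ub (R : realType) (s : seq R) :
  1 <= foldr Num.max 1 s /\ forall x, x \in s -> x <= foldr Num.max 1 s.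
Proof.
elim: s => [|y s [IH1 IH2]] /=; first by split.
split; first by rewrite le_max IH1 orbT.
move=> x; rewrite inE => /orP[/eqP ->|xs]; first by rewrite le_max lexx.
by rewrite le_max IH2 ?orbT.
Qed.

Lemma c0_bounded (R : realType) (K : fieldType) (abs : K -> R) (A : Type) (h : A -> K) :
  c0 abs h -> exists B, 0 <= B /\ forall a, abs (h a) <= B.
Proof.
move=> hc; have /finite_image := hc 1 ltr01 => /(_ _ (fun a => abs (h a))).
move=> /finite_fsetP [X eX].
have [B1 B2] := foldr_max_ub (enum_fset X).
exists (foldr Num.max 1 (enum_fset X)); split; first by apply: le_trans B1; exact: ler01.
move=> a; have [le1|lt1] := leP 1 (abs (h a)).
  apply: B2; have : [set` X] (abs (h a)) by rewrite -eX; exists a.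
  by [].
by apply: le_trans B1; apply: ltW.
Qed.

Lemma c0_add (R : realType) (K : fieldType) (abs : K -> R) (A : Type) (f g : A -> K) :
  nonarch_abs abs -> c0 abs f -> c0 abs g -> c0 abs (fun a => f a + g a).
Proof.
move=> [_ _ _ hu] hf hg e e0.
apply: (@sub_finite_set _ _ ([set a | e <= abs (f a)] `|` [set a | e <= abs (g a)])).
  move=> a /= ea; have := le_trans ea (hu (f a) (g a)).
  by rewrite le_max => /orP[]; [left|right].
by rewrite finite_setU; split; [apply: hf|apply: hg].
Qed.

Lemma c0_scale (R : realType) (K : fieldType) (abs : K -> R) (A : Type) (c : K) (g : A -> K) :
  nonarch_abs abs -> c0 abs g -> c0 abs (fun a => c * g a).
Proof.
move=> h hg e e0; have [h0 h1 hM _] := h.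
have [->|cnz] := eqVneq c 0.
  apply: (@sub_finite_set _ _ set0); last exact: finite_set0.
  by move=> a /=; rewrite mul0r (abs0 h) => /(lt_le_trans e0); rewrite ltxx.
have ac : 0 < abs c.
  by rewrite lt_neqAle h0 andbT eq_sym; apply/eqP => /h1 /eqP; rewrite (negbTE cnz).
apply: (@sub_finite_set _ _ [set a | e / abs c <= abs (g a)]).
  by move=> a /=; rewrite hM => ea; rewrite ler_pdivrMr // mulrC.
by apply: hg; rewrite divr_gt0.
Qed.

Lemma c0_opp (R : realType) (K : fieldType) (abs : K -> R) (A : Type) (g : A -> K) :
  nonarch_abs abs -> c0 abs g -> c0 abs (fun a => - g a).
Proof. by move=> h hg e e0; under eq_set do rewrite (absN h); apply: hg. Qed.

Lemma c0_sub (R : realType) (K : fieldType) (abs : K -> R) (A : Type) (f g : A -> K) :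
  nonarch_abs abs -> c0 abs f -> c0 abs g -> c0 abs (fun a => f a - g a).
Proof. by move=> h hf hg; apply: c0_add => //; apply: c0_opp. Qed.

Lemma cd_has_sup (R : realType) (K : fieldType) (abs : K -> R) (A : Type) (f g : A -> K) :
  nonarch_abs abs -> c0 abs f -> c0 abs g ->
  has_sup ([set 0] `|` range (fun a => abs (f a - g a))).
Proof.
move=> h hf hg; have [B [B0 hB]] := c0_bounded (c0_sub h hf hg).
split; first by exists 0; left.
by exists B => x [->|[a _ <-]].
Qed.

Lemma cd_pt (R : realType) (K : fieldType) (abs : K -> R) (A : Type) (f g : A -> K) :
  nonarch_abs abs -> c0 abs f -> c0 abs g -> forall a, abs (f a - g a) <= c0dist abs f g.
Proof.
move=> h hf hg a; have := sup_upper_bound (cd_has_sup h hf hg).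
by apply; right; exists a.
Qed.

Lemma cd_ge0 (R : realType) (K : fieldType) (abs : K -> R) (A : Type) (f g : A -> K) :
  nonarch_abs abs -> c0 abs f -> c0 abs g -> 0 <= c0dist abs f g.
Proof.
move=> h hf hg; have := sup_upper_bound (cd_has_sup h hf hg).
by apply; left.
Qed.

Lemma cd_le (R : realType) (K : fieldType) (abs : K -> R) (A : Type) (f g : A -> K) (B : R) :
  0 <= B -> (forall a, abs (f a - g a) <= B) -> c0dist abs f g <= B.
Proof.
move=> B0 hB; apply: ge_sup; first by exists 0; left.
by move=> x [->|[a _ <-]].
Qed.

Lemma cd_sym (R : realType) (K : fieldType) (abs : K -> R) (A : Type) (f g : A -> K) :
  nonarch_abs abs -> c0dist abs f g = c0dist abs g f.
Proof.
move=> h; rewrite /c0dist.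
have -> : (fun a => abs (f a - g a)) = (fun a => abs (g a - f a)).
  by apply: funext => a; rewrite (absB h).
by [].
Qed.

Lemma cd_refl (R : realType) (K : fieldType) (abs : K -> R) (A : Type) (f : A -> K) :
  nonarch_abs abs -> c0dist abs f f = 0.
Proof.
move=> h; apply/eqP; rewrite eq_le; apply/andP; split.
  by apply: cd_le => // a; rewrite subrr (abs0 h).
apply: sup_upper_bound; last by left.
split; first by exists 0; left.
by exists 0 => x [->|[a _ <-]] //; rewrite subrr (abs0 h).
Qed.

Lemma cd_ult (R : realType) (K : fieldType) (abs : K -> R) (A : Type) (f g k : A -> K) :
  nonarch_abs abs -> c0 abs f -> c0 abs g -> c0 abs k ->
  c0dist abs f k <= Num.max (c0dist abs f g) (c0dist abs g k).
Proof.
move=> h hf hg hk; apply: cd_le.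
  by rewrite le_max (cd_ge0 h hf hg).
move=> a; apply: le_trans (ultra h _ (g a) _) _.
by rewrite ge_max !le_max (cd_pt h hf hg) (cd_pt h hg hk) orbT.
Qed.

Lemma cd_eq0 (R : realType) (K : fieldType) (abs : K -> R) (A : Type) (f g : A -> K) :
  nonarch_abs abs -> c0 abs f -> c0 abs g -> c0dist abs f g <= 0 -> f = g.
Proof.
move=> h hf hg le0; apply: funext => a.
have := le_trans (cd_pt h hf hg a) le0.
have [h0 h1 _ _] := h.
move=> le; have : abs (f a - g a) = 0 by apply/eqP; rewrite eq_le le h0.
by move/h1/eqP; rewrite subr_eq0 => /eqP.
Qed.

Definition th (R : realType) (n : nat) : R := (n.+1%:R)^-1.

Lemma th_gt0 (R : realType) n : 0 < th R n.
Proof. by rewrite /th invr_gt0 ltr0Sn. Qed.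

Lemma th_le (R : realType) n k : (n <= k)%N -> th R k <= th R n.
Proof. by move=> nk; rewrite /th lef_pV2 ?posrE ?ltr0Sn // ler_nat ltnS. Qed.

Lemma th_lt (R : realType) n : th R n.+1 < th R n.
Proof. by rewrite /th ltf_pV2 ?posrE ?ltr0Sn // ltr_nat ltnS. Qed.

Lemma th_small (R : realType) (e : R) : 0 < e -> exists n, th R n < e.
Proof.
move=> e0; have ei : 0 <= e^-1 by rewrite invr_ge0 ltW.
have := @archi_boundP _ e^-1 ei.
set m := Num.Def.archi_bound _ => hm; exists m.
rewrite /th -[e]invrK ltf_pV2 ?posrE ?ltr0Sn ?invr_gt0 //.
by apply: lt_trans hm _; rewrite ltr_nat.
Qed.

Definition cauchy_seq (R : realType) (K : fieldType) (abs : K -> R) (w : nat -> K) :=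
  forall e, 0 < e -> exists N, forall n k, (N <= n)%N -> (N <= k)%N -> abs (w n - w k) < e.

Definition conv_to (R : realType) (K : fieldType) (abs : K -> R) (w : nat -> K) (l : K) :=
  forall e, 0 < e -> exists N, forall k, (N <= k)%N -> abs (l - w k) < e.

Lemma foldr_maxn_In (T : Type) (g : T -> nat) (s : seq T) l :
  List.In l s -> (g l <= foldr maxn 0 (map g s))%N.
Proof.
elim: s => [//|y s IH] /= [->|ls]; first by rewrite leq_maxl.
by apply: leq_trans (IH ls) _; rewrite leq_maxr.
Qed.

Lemma core_complete (R : realType) (K : fieldType) (abs : K -> R) (S : set K) (w : nat -> K) :
  nonarch_abs abs -> compact_in abs S -> (forall k, S (w k)) -> cauchy_seq abs w ->
  exists l, conv_to abs w l.
Proof.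
move=> h hS wS hc.
case: (EM (exists l, conv_to abs w l)) => // nl; exfalso.
have H : forall l, exists p : R * nat, 0 < p.1 /\ forall n, (p.2 <= n)%N -> p.1 <= abs (l - w n).
  move=> l; case: (EM (exists p : R * nat, 0 < p.1 /\ forall n, (p.2 <= n)%N -> p.1 <= abs (l - w n))) => // np.
  exfalso; apply: nl; exists l => e e0.
  have [N hN] := hc e e0.
  case: (EM (exists k, (N <= k)%N /\ abs (l - w k) < e)) => [[k [Nk lk]]|nk].
    by exists N => k' Nk'; apply: (ultra_lt h lk); apply: hN.
  exfalso; apply: np; exists (e, N); split => // n /= Nn.
  by rewrite leNgt; apply/negP => lt; apply: nk; exists n.
have [p hp] := choice H.
have := hS K (fun l => [set z | abs (z - l) < (p l).1]).
case.
- move=> l z /= zl; exists (p l).1; first by case: (hp l).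
  by move=> y yz; apply: (ultra_lt h yz zl).
- by move=> z _; exists z => /=; rewrite subrr (abs0 h); case: (hp z).
move=> s hs.
pose N := foldr maxn 0 (map (fun l => (p l).2) s).
have [l [ls /= wl]] := hs (w N) (wS N).
have := (proj2 (hp l)) N (foldr_maxn_In (fun l => (p l).2) ls).
by rewrite (absB h) leNgt wl.
Qed.

Lemma conv_th (R : realType) (K : fieldType) (abs : K -> R) (v : nat -> K) l :
  nonarch_abs abs -> (forall n k, (n <= k)%N -> abs (v n - v k) <= th R n) ->
  conv_to abs v l -> forall n, abs (l - v n) <= th R n.
Proof.
move=> h hv hl n; have [N hN] := hl _ (th_gt0 R n).
apply: (ultra_le h (y := v (maxn n N))).
  by apply: ltW; apply: hN; rewrite leq_maxr.
by rewrite (absB h); apply: hv; rewrite leq_maxl.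
Qed.

Lemma th_cauchy (R : realType) (K : fieldType) (abs : K -> R) (v : nat -> K) :
  nonarch_abs abs -> (forall n k, (n <= k)%N -> abs (v n - v k) <= th R n) ->
  cauchy_seq abs v.
Proof.
move=> h hv e e0; have [N hN] := th_small e0; exists N => n k Nn Nk.
apply: le_lt_trans hN; apply: (ultra_le h (y := v N)).
  by rewrite (absB h); apply: hv.
by apply: hv.
Qed.

Lemma K_complete (R : realType) (K : fieldType) (abs : K -> R) (v : nat -> K) :
  nonarch_abs abs -> locally_compact_field abs ->
  (forall n k, (n <= k)%N -> abs (v n - v k) <= th R n) ->
  exists l, forall n, abs (l - v n) <= th R n.
Proof.
move=> h hlc hv.
have [r r0 hr] := hlc 0.
have [M hM] := th_small r0.
pose w k := v (M + k)%N - v M.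
have wS : forall k, [set y | abs (y - 0) <= r] (w k).
  move=> k /=; rewrite subr0 /w; apply: le_trans (ltW hM).
  by rewrite (absB h); apply: hv; rewrite leq_addr.
have wc : cauchy_seq abs w.
  move=> e e0; have [N hN] := th_cauchy h hv e0; exists N => n k Nn Nk.
  rewrite /w opprB addrA subrK; apply: hN; apply: leq_trans (leq_addl _ _); done.
have [l' hl'] := core_complete h hr wS wc.
exists (l' + v M); apply: (conv_th h hv) => e e0.
have [N hN] := hl' e e0; exists (M + N)%N => k MNk.
have -> : k = (M + (k - M))%N by rewrite subnKC // (leq_trans (leq_addr N M)).
have := hN (k - M)%N; rewrite /w opprB addrA => -> //.
by rewrite leq_subRL ?(leq_trans (leq_addr N M)).
Qed.

Lemma le_th0 (R : realType) (t : R) N : (forall n, (N <= n)%N -> t <= th R n) -> t <= 0.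
Proof.
move=> ht; rewrite leNgt; apply/negP => t0.
have [m hm] := th_small t0.
have := ht (maxn m N) (leq_maxr _ _).
by rewrite leNgt (le_lt_trans (th_le R (leq_maxl m N)) hm).
Qed.

Lemma c0_zero (R : realType) (K : fieldType) (abs : K -> R) (A : Type) :
  nonarch_abs abs -> c0 abs (fun _ : A => 0).
Proof.
move=> h e e0; apply: (@sub_finite_set _ _ set0); last exact: finite_set0.
by move=> a /=; rewrite (abs0 h) => /(lt_le_trans e0); rewrite ltxx.
Qed.

Lemma simplex_c0 (R : realType) (K : fieldType) (abs : K -> R) (pi : K) (A : Type) (S : set (A -> K)) f :
  nonarch_abs abs -> simplex abs pi S -> S f -> c0 abs f.
Proof.
move=> h [A' [x [k [hx ->]]]] [y [hy _ _ ->]].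
by apply: c0_add => //; apply: c0_scale.
Qed.

Lemma upoly_c0 (R : realType) (K : fieldType) (abs : K -> R) (pi : K) (A : Type) (P : set (A -> K)) f :
  nonarch_abs abs -> uniform_polyhedron abs pi P -> P f -> c0 abs f.
Proof.
move=> h [F [s [[hs _ ->] _ _]]] [i si].
exact: simplex_c0 (hs i) si.
Qed.

Lemma P_complete (R : realType) (K : fieldType) (abs : K -> R) (pi : K) (A : Type)
    (P : set (A -> K)) (u : nat -> A -> K) :
  nonarch_abs abs -> locally_compact_field abs -> uniform_polyhedron abs pi P ->
  (forall n, P (u n)) ->
  (forall n k, (n <= k)%N -> c0dist abs (u n) (u k) <= th R n) ->
  exists z, P z /\ forall n, c0dist abs z (u n) <= th R n.
Proof.
move=> h hlc hup uP hu.
have uc : forall n, c0 abs (u n) by move=> n; apply: upoly_c0 hup (uP n).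
have [h0 h1 hM _] := h.
have Hz : forall a, exists l, forall n, abs (l - u n a) <= th R n.
  move=> a; apply: K_complete => // n k nk.
  by apply: le_trans (hu n k nk); apply: cd_pt.
have [z hz] := choice Hz.
have zd : forall n, c0dist abs z (u n) <= th R n.
  by move=> n; apply: cd_le; [exact: ltW (th_gt0 R n)|move=> a; apply: hz].
exists z; split => //.
case: hup => F [s [[hs hdisj hP] _ [delta d0 hsep]]].
have [N hN] := th_small d0.
have : P (u N) by [].
rewrite {1}hP => -[i si].
have uk : forall k, (N <= k)%N -> s i (u k).
  move=> k Nk; have : P (u k) by [].
  rewrite {1}hP => -[j sj].
  case: (EM (i = j)) => [-> //|ij]; exfalso.
  have := hsep i j ij _ _ si sj.
  by rewrite leNgt (le_lt_trans (hu N k Nk) hN).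
rewrite hP; exists i.
have := hs i => -[A' [x [kk [hx es]]]].
move: si uk; rewrite es => si uk.
pose c := pi ^ kk.
have Hy : forall k, exists y : A -> K, (N <= k)%N ->
    [/\ c0 abs y, coord_sub A' y, c0dist abs y (fun _ => 0) <= 1 &
        u k = (fun a => x a + c * y a)].
  move=> k; case: (leqP N k) => Nk; last by exists (fun _ => 0).
  by have [y hy] := uk k Nk; exists y.
have [y hy] := choice Hy.
have zx : forall a, (forall n, (N <= n)%N -> u n a = x a) -> z a = x a.
  move=> a ha; apply/eqP; rewrite -subr_eq0; apply/eqP/h1.
  apply/eqP; rewrite eq_le h0 andbT; apply: (le_th0 (N := N)) => n Nn.
  by rewrite -(ha n Nn); apply: hz.
have [c0e|cnz] := eqVneq c 0.
  exists (fun _ => 0); split.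
  - exact: c0_zero.
  - by [].
  - by rewrite cd_refl // ler01.
  apply: funext => a; rewrite mulr0 addr0; apply: zx => n Nn.
  by have [_ _ _ ->] := hy n Nn; rewrite c0e mul0r addr0.
have ac : 0 < abs c.
  by rewrite lt_neqAle h0 andbT eq_sym; apply/eqP => /h1 /eqP; rewrite (negbTE cnz).
pose yy a := (z a - x a) / c.
have est : forall n a e, (N <= n)%N -> th R n < abs c * e -> abs (yy a - y n a) < e.
  move=> n a e Nn lt; have [_ _ _ eu] := hy n Nn.
  have -> : yy a - y n a = (z a - u n a) / c.
    rewrite eu /yy; apply: (mulIf cnz); rewrite mulrBl !divfK //.
    by rewrite mulrC opprD addrA.
  rewrite hM (absV h) ltr_pdivrMr // mulrC; apply: le_lt_trans lt; exact: hz.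
have small : forall e, 0 < e -> exists n, (N <= n)%N /\ th R n < abs c * e.
  move=> e e0; have [m hm] := th_small (mulr_gt0 ac e0).
  exists (maxn m N); split; first exact: leq_maxr.
  by apply: le_lt_trans hm; apply: th_le; apply: leq_maxl.
have yc : c0 abs yy.
  move=> e e0; have [n [Nn hn]] := small e e0.
  have [ync _ _ _] := hy n Nn.
  apply: (@sub_finite_set _ _ [set a | e <= abs (y n a)]); last exact: ync.
  move=> a ea; rewrite /= leNgt; apply/negP => lt.
  have l2 : abs (y n a - 0) < e by rewrite subr0.
  have := ultra_lt h (est n a e Nn hn) l2.
  by rewrite subr0 ltNge ea.
exists yy; split => //.
- move=> a na; rewrite /yy (zx a) ?subrr ?mul0r // => n Nn.
  have [_ hcs _ ->] := hy n Nn; by rewrite hcs // mulr0 addr0.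
- apply: cd_le; first exact: ler01.
  move=> a; have [n [Nn hn]] := small 1 ltr01.
  have [ync _ yb _] := hy n Nn.
  apply: (ultra_le h (y := y n a)); first exact: (ltW (est n a 1 Nn hn)).
  apply: le_trans yb; exact: (cd_pt h ync (c0_zero A h)).
- by apply: funext => a; rewrite /yy mulrC divfK // addrC subrK.
Qed.

Definition good (R : realType) (Y : gauge_space R) (H : Y -> Y -> Prop) :=
  [/\ entourage H, (forall y, H y y), (forall y y', H y y' -> H y' y) &
      (forall y y' y'', H y y' -> H y' y'' -> H y y'')].

Lemma entourage_sup (R : realType) (Y : gauge_space R) (H1 H2 : Y -> Y -> Prop) :
  entourage H1 -> (forall y y', H1 y y' -> H2 y y') -> entourage H2.
Proof.
move=> [n [ds [d [d0 hds hH]]]] sub; exists n, ds, d; split => // y y' hy.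
by apply: sub; apply: hH.
Qed.

Lemma entourage_meet (R : realType) (Y : gauge_space R) (H1 H2 : Y -> Y -> Prop) :
  entourage H1 -> entourage H2 -> entourage (fun y y' => H1 y y' /\ H2 y y').
Proof.
move=> [n1 [ds1 [d1 [d10 hds1 hH1]]]] [n2 [ds2 [d2 [d20 hds2 hH2]]]].
pose ds (i : 'I_(n1 + n2)) := match split i with inl j => ds1 j | inr j => ds2 j end.
exists (n1 + n2)%N, ds, (Num.min d1 d2); split.
- by rewrite lt_min d10 d20.
- by move=> i; rewrite /ds; case: (split i).
move=> y y' hy; split.
  apply: hH1 => j; have := hy (unsplit (inl j)); rewrite /ds unsplitK.
  by move/lt_le_trans; apply; rewrite ge_min lexx.
apply: hH2 => j; have := hy (unsplit (inr j)); rewrite /ds unsplitK.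
by move/lt_le_trans; apply; rewrite ge_min lexx orbT.
Qed.

Lemma basic_good (R : realType) (Y : gauge_space R) n (ds : 'I_n -> Y -> Y -> R) (d : R) :
  ultrauniform Y -> 0 < d -> (forall i, gs_gauge Y (ds i)) ->
  good (fun y y' => forall i, ds i y y' < d).
Proof.
move=> hY d0 hds; split.
- by exists n, ds, d.
- by move=> y i; have [_ -> _ _] := hY _ (hds i).
- by move=> y y' hy i; have [_ _ -> _] := hY _ (hds i); apply: hy.
- move=> y y' y'' a b i; have [_ _ _ hu] := hY _ (hds i).
  by apply: le_lt_trans (hu y y' y'') _; rewrite gt_max a b.
Qed.

Lemma good_meet (R : realType) (Y : gauge_space R) (H1 H2 : Y -> Y -> Prop) :
  good H1 -> good H2 -> good (fun y y' => H1 y y' /\ H2 y y').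
Proof.
move=> [e1 r1 s1 t1] [e2 r2 s2 t2]; split.
- exact: entourage_meet.
- by [].
- by move=> y y' [] /s1 a /s2 b.
- by move=> y y' y'' [a b] [c d]; split; [apply: t1 a c|apply: t2 b d].
Qed.

Lemma good_ext (R : realType) (Y : gauge_space R) (H1 H2 : Y -> Y -> Prop) :
  (forall y y', H1 y y' <-> H2 y y') -> good H1 -> good H2.
Proof.
move=> e [e1 r1 s1 t1]; split.
- by apply: entourage_sup e1 _ => y y' /e.
- by move=> y; apply/e.
- by move=> y y' /e /s1 /e.
- by move=> y y' y'' /e a /e b; apply/e; apply: t1 a b.
Qed.

Lemma good_G (R : realType) (Y : gauge_space R) (H : nat -> Y -> Y -> Prop) :
  (forall n, good (H n)) -> forall n, good (fun y y' => forall m, (m <= n)%N -> H m y y').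
Proof.
move=> hH; elim=> [|n IH].
  apply: good_ext (hH 0%N) => y y'; split; first by move=> a m; rewrite leqn0 => /eqP ->.
  by apply.
apply: good_ext (good_meet IH (hH n.+1)) => y y'; split.
  by move=> [a b] m; rewrite leq_eqVlt => /orP[/eqP -> //|]; rewrite ltnS; apply: a.
by move=> a; split; [move=> m mn; apply: a; apply: leqW|apply: a].
Qed.

Lemma last_true (Pn : nat -> Prop) : Pn 0%N -> forall n, ~ Pn n -> exists m, Pn m /\ ~ Pn m.+1.
Proof.
move=> P0; elim=> [//|n IH] nPn.
case: (EM (Pn n)) => [pn|npn]; first by exists n.
exact: IH.
Qed.

Theorem theorem2p11 (R : realType) (K : fieldType) (abs : K -> R) (pi : K)
    (A : Type) (P : set (A -> K)) :
  nonarch_abs abs -> locally_compact_field abs -> nondiscrete_field abs ->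
  max_abs_lt1 abs pi ->
  uniform_polyhedron abs pi P ->
  ANRU (c0_subspace abs P).
Proof.
move=> h hlc _ _ hup.
pose X := c0_subspace abs P.
pose dX (x x' : X) := c0dist abs (proj1_sig x) (proj1_sig x').
have xc : forall x : X, c0 abs (proj1_sig x) by move=> x; apply: upoly_c0 hup (proj2_sig x).
have dX_ge0 : forall x x', 0 <= dX x x' by move=> x x'; apply: cd_ge0.
have dX_sym : forall x x', dX x x' = dX x' x by move=> x x'; apply: cd_sym.
have dX_ult : forall x x' x'', dX x x'' <= Num.max (dX x x') (dX x' x'').
  by move=> x x' x''; apply: cd_ult.
have dX_refl : forall x, dX x x = 0 by move=> x; apply: cd_refl.
have dX_eq : forall x x' : X, dX x x' <= 0 -> x = x'.
  move=> [f fP] [g gP] /= le.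
  have ef : f = g by apply: (cd_eq0 h (xc (exist _ f fP)) (xc (exist _ g gP)) le).
  by subst g; congr exist; exact: Prop_irrelevance.
have gX : gs_gauge X dX by [].
split.
  by move=> d /= ->; split; [exact: dX_ge0|exact: dX_refl|exact: dX_sym|exact: dX_ult].
move=> Y e hY [_ _ hemb].
have HH : forall n, exists H : Y -> Y -> Prop, good H /\
    forall x x', H (e x) (e x') -> dX x x' < th R n.
  move=> n.
  have En : entourage (fun x x' : X => dX x x' < th R n).
    exists 1%N, (fun _ => dX), (th R n); split; [exact: th_gt0|by []|by move=> x x'; apply; exact: ord0].
  have [F [k [ds [d [d0 hds hF]]]] hFE] := hemb _ En.
  exists (fun y y' => forall i, ds i y y' < d); split; first exact: basic_good.
  by move=> x x' hx; apply: hFE; apply: hF.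
have [H hH] := choice HH.
pose G n := fun y y' => forall m, (m <= n)%N -> H m y y'.
have Gg : forall n, good (G n) by apply: good_G => n; case: (hH n).
have Gdec : forall m n y y', (m <= n)%N -> G n y y' -> G m y y'.
  by move=> m n y y' mn hg k km; apply: hg; apply: leq_trans mn.
have GX : forall n x x', G n (e x) (e x') -> dX x x' < th R n.
  by move=> n x x' hg; apply: (proj2 (hH n)); apply: hg.
have Gs : forall n y y', G n y y' -> G n y' y by move=> n; case: (Gg n).
have Gt : forall n y y' y'', G n y y' -> G n y' y'' -> G n y y'' by move=> n; case: (Gg n).
have Gr : forall n y, G n y y by move=> n; case: (Gg n).
pose V := fun y => exists x, G 0%N (e x) y.
pose Q (y : Y) := fun x : X => forall n x', G n (e x') y -> dX x x' <= th R n.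
have Qex : forall y, V y -> exists x, Q y x.
  move=> y [x0 hx0].
  pose Pn n := exists x, G n (e x) y.
  case: (EM (forall n, Pn n)) => [allP|].
    have [xs hxs] := choice allP.
    pose u n := proj1_sig (xs n).
    have uC : forall n k, (n <= k)%N -> c0dist abs (u n) (u k) <= th R n.
      move=> n k nk; apply: ltW; apply: GX.
      by apply: Gt (hxs n) (Gs _ _ _ (Gdec _ _ _ _ nk (hxs k))).
    have [z [zP hz]] := P_complete h hlc hup (fun n => proj2_sig (xs n)) uC.
    exists (exist _ z zP) => n x' hx'.
    have a : dX (exist _ z zP) (xs n) <= th R n by apply: hz.
    apply: le_trans (dX_ult _ (xs n) _) _; rewrite ge_max a /=.
    by apply: ltW; apply: GX; apply: Gt (hxs n) (Gs _ _ _ hx').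
  move=> nall; have [n nPn] : exists n, ~ Pn n.
    case: (EM (exists n, ~ Pn n)) => // ne; exfalso; apply: nall => n.
    by case: (EM (Pn n)) => // np; exfalso; apply: ne; exists n.
  have [m [[x hx] nPm]] := last_true (ex_intro _ x0 hx0 : Pn 0%N) nPn.
  exists x => k x' hx'.
  case: (leqP k m) => km.
    by apply: ltW; apply: GX; apply: Gt (Gdec _ _ _ _ km hx) (Gs _ _ _ hx').
  by exfalso; apply: nPm; exists x'; apply: Gdec km hx'.
have inh : forall yv : {y : Y | V y}, inhabited X.
  by move=> [y [x _]]; constructor; exact: x.
pose r (yv : {y : Y | V y}) : X := ClassicalEpsilon.epsilon (inh yv) (Q (proj1_sig yv)).
have rQ : forall yv, Q (proj1_sig yv) (r yv).
  by move=> yv; apply: ClassicalEpsilon.epsilon_spec; apply: Qex; exact: (proj2_sig yv).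
have Lip : forall (yv yv' : {y : Y | V y}) n, G n.+1 (proj1_sig yv) (proj1_sig yv') ->
    dX (r yv) (r yv') < th R n.
  move=> yv yv' n hg.
  case: (EM (exists x', G n.+1 (e x') (proj1_sig yv))) => [[x' hx']|nx].
    have a := rQ yv n.+1 x' hx'.
    have b := rQ yv' n.+1 x' (Gt _ _ _ _ hx' hg).
    apply: le_lt_trans (th_lt R n); apply: le_trans (dX_ult _ x' _) _.
    by rewrite ge_max a dX_sym b.
  have eqG : forall k x', G k (e x') (proj1_sig yv) <-> G k (e x') (proj1_sig yv').
    move=> k x'; case: (leqP k n.+1) => kn.
      split => a; first by apply: Gt a (Gdec _ _ _ _ kn hg).
      by apply: Gt a (Gs _ _ _ (Gdec _ _ _ _ kn hg)).
    split => a; exfalso; apply: nx; exists x'.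
      by apply: Gdec (ltnW kn) a.
    by apply: Gt (Gdec _ _ _ _ (ltnW kn) a) (Gs _ _ _ hg).
  have eQ : Q (proj1_sig yv) = Q (proj1_sig yv').
    apply: funext => x; apply: propext; split => a k x' hx'; apply: a; exact/eqG.
  have -> : r yv = r yv'.
    rewrite /r eQ; congr ClassicalEpsilon.epsilon; exact: Prop_irrelevance.
  by rewrite dX_refl; exact: th_gt0.
exists V; split.
  exists (G 0%N); first by case: (Gg 0%N).
  by move=> x y hxy; exists x.
exists r; split.
  move=> x hv; apply: dX_eq; apply: (le_th0 (N := 0%N)) => n _.
  have := rQ (exist _ (e x) hv) n x (Gr _ _); by rewrite /=.
move=> E [k [ds [d [d0 hds hE]]]].
have [n hn] := th_small d0.
exists (G n.+1); first by case: (Gg n.+1).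
move=> yv yv' hg; apply: hE => i; rewrite (hds i).
exact: lt_trans (Lip _ _ _ hg) hn.
Qed.
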